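(* Assume that $\Gamma_1$ and $\Gamma_2$ are regular inhomogeneous $Y$-semigroups and that $A_{\Gamma_1}(t)f=A_{\Gamma_2}(t)f$ for all $f \in Y_1$ and all $t \in J$. Then $\Gamma_1(s,t)f=\Gamma_2(s,t)f$ for all $f \in Y_1$ and all $(s,t) \in \Delta_J$. In particular, if $Y_1$ is dense in $Y$, then $\Gamma_1$ and $\Gamma_2$ agree on $Y$.
   Context: Let $(Y,\|\cdot\|)$ be a real separable Banach space and $(Y_1,\|\cdot\|_{Y_1})$ a real separable Banach space continuously embedded in $Y$. $J$ is either $\mathbb{R}^+$ or $[0,T_\infty]$ ($T_\infty>0$), $\Delta_J=\{(s,t)\in J^2:s\le t\}$, $J(s)=\{t\in J:t\ge s\}$. An inhomogeneous $Y$-semigroup is a map $\Gamma:\Delta_J\to\mathcal B(Y)$ with $\Gamma(t,t)=I$ and $\Gamma(s,r)\Gamma(r,t)=\Gamma(s,t)$ for $s\le r\le t$. Generator: for $t\in J$, $\mathcal D(A_\Gamma(t))$ is the set of $f\in Y$ such that $\lim_{h\downarrow0,\,t+h\in J}h^{-1}(\Gamma(t,t+h)-I)f$ and $\lim_{h\downarrow0,\,t-h\in J}h^{-1}(\Gamma(t-h,t)-I)f$ exist in $Y$ and are equal, $A_\Gamma(t)f$ being the common value; $\mathcal D(A_\Gamma)=\bigcap_t\mathcal D(A_\Gamma(t))$. $\Gamma$ is regular if: $Y_1\subseteq\mathcal D(A_\Gamma)$; $\Gamma(s,t)Y_1\subseteq Y_1$ for all $(s,t)\in\Delta_J$ and for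 every $f\in Y_1$, $t\in J$, $u\mapsto\Gamma(u,t)f$ is $\|\cdot\|_{Y_1}$-continuous on $\{u\in J:u\le t\}$; for every $f\in Y$, $s\in J$, $u\mapsto\Gamma(s,u)f$ is continuous from $J(s)$ into $Y$; and for all $(s,t)\in\Delta_J$, $f\in Y_1$, $u\mapsto\Gamma(s,u)A_\Gamma(u)f$ is Bochner integrable on $[s,t]$. *)

(* Defs.v *)
From HB Require Import structures.
From mathcomp Require Import all_boot all_order all_algebra.
From mathcomp Require Import all_classical all_reals all_analysis.
Set Implicit Arguments. Unset Strict Implicit. Unset Printing Implicit Defensive.
Import Order.TTheory GRing.Theory Num.Theory.
Import numFieldNormedType.Exports.
Local Open Scope classical_set_scope.
Local Open Scope ring_scope.

Definition separable (T : topologicalType) : Prop :=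
  exists D : set T, countable D /\ closure D = setT.

Definition time_set (R : realType) (J : set R) : Prop :=
  J = [set x | 0 <= x] \/ exists T : R, 0 < T /\ J = [set x | 0 <= x <= T].

Section Semigroups.
Variables (R : realType) (Y : normedModType R).

Definition bounded_linear (L : Y -> Y) : Prop :=
  (forall (a : R) (x y : Y), L (a *: x + y) = a *: L x + L y) /\ continuous L.

(* inhomogeneous Y-semigroup indexed by Delta_J (values off Delta_J irrelevant) *)
Definition inh_semigroup (J : set R) (G : R -> R -> Y -> Y) : Prop :=
  [/\ forall s t, J s -> J t -> s <= t -> bounded_linear (G s t),
      forall t, J t -> G t t = id
    & forall s r t, J s -> J r -> J t -> s <= r -> r <= t ->
        forall f, G s r (G r t f) = G s t f].

(* "A_G(t) f = g": both one-sided difference quotients (with h > 0 and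
   t+h in J, resp. t-h in J) converge to g.  When one of these filters is
   empty (t an endpoint of J) that condition is vacuous. *)
Definition is_generator_value (J : set R) (G : R -> R -> Y -> Y)
    (t : R) (f g : Y) : Prop :=
  J t /\
  ((fun h : R => h^-1 *: (G t (t + h) f - f))
     @ within (fun h : R => J (t + h)) (0 : R)^'+ --> g) /\
  ((fun h : R => h^-1 *: (G (t - h) t f - f))
     @ within (fun h : R => J (t - h)) (0 : R)^'+ --> g).

Definition gen_domain (J : set R) (G : R -> R -> Y -> Y) (t : R) : set Y :=
  [set f | exists g, is_generator_value J G t f g].

Definition generator (J : set R) (G : R -> R -> Y -> Y) (t : R) (f : Y) : Y :=
  xget 0 (is_generator_value J G t f).

Definition simple_fun (s : R -> Y) : Prop :=
  exists (n : nat) (A : 'I_n -> set R) (v : 'I_n -> Y),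
    (forall i, measurable (A i)) /\
    forall x, s x = \sum_(i < n) (\1_(A i) x : R) *: v i.

Definition bochner_integrable (D : set R) (g : R -> Y) : Prop :=
  (exists u : nat -> R -> Y, (forall n, simple_fun (u n)) /\
     {ae (@lebesgue_measure R), forall x, D x -> u n x @[n --> \oo] --> g x}) /\
  (\int[@lebesgue_measure R]_(x in D) (`|g x| : R)%:E < +oo)%E.

End Semigroups.

Definition regular (R : realType) (Y Y1 : normedModType R) (i : Y1 -> Y)
    (J : set R) (G : R -> R -> Y -> Y) : Prop :=
  [/\ forall f : Y1, forall t, J t -> gen_domain J G t (i f),
      forall s t, J s -> J t -> s <= t ->
        forall f : Y1, exists f' : Y1, i f' = G s t (i f),
      forall (f : Y1) t, J t ->
        exists g : R -> Y1,
          (forall u, J u -> u <= t -> i (g u) = G u t (i f)) /\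
          {within [set u | J u /\ u <= t], continuous g},
      forall (f : Y) s, J s ->
        {within [set u | J u /\ s <= u], continuous (fun u => G s u f)}
    & forall s t, J s -> J t -> s <= t -> forall f : Y1,
        bochner_integrable `[s, t] (fun u => G s u (generator J G u (i f)))].

(* Main.v *)
Set Warnings "-all".
Require Import Defs.
From HB Require Import structures.
From mathcomp Require Import all_boot all_order all_algebra.
From mathcomp Require Import all_classical all_reals all_analysis.
From mathcomp Require Import ring lra.
Import Order.TTheory GRing.Theory Num.Theory.
Import numFieldNormedType.Exports.
Local Open Scope classical_set_scope.
Local Open Scope ring_scope.
Set Implicit Arguments. Unset Strict Implicit.
Section Gen.
Variables (R : realType) (Y Z : normedModType R).

Definition islin (L : Y -> Z) := forall (a : R) (x y : Y), L (a *: x + y) = a *: L x + L y.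

Lemma islin0 L : islin L -> L 0 = 0.
Proof.
move=> hL; have := hL 1 0 0; rewrite !scale1r addr0.
move=> h; have : L 0 + L 0 - L 0 = L 0 - L 0 by rewrite -h.
by rewrite addrK subrr.
Qed.

Lemma islinB L : islin L -> forall x y, L (x - y) = L x - L y.
Proof.
move=> hL x y; have := hL (-1) y x.
by rewrite !scaleN1r addrC [_ + L x]addrC => ->.
Qed.

Lemma islinZ L : islin L -> forall a x, L (a *: x) = a *: L x.
Proof. by move=> hL a x; have := hL a x 0; rewrite addr0 islin0 // addr0. Qed.

Lemma scale_bound L (M d : R) : islin L -> 0 < d ->
  (forall y, `|y| <= d -> `|L y| <= M) -> forall x, `|L x| <= M / d * `|x|.
Proof.
move=> hL d0 hM x.
have [->|x0] := eqVneq x 0.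
  rewrite islin0 // !normr0 mulr0 //.
have nx : 0 < `|x| by rewrite normr_gt0.
have ny : `|(d / `|x|) *: x| = d.
  by rewrite normrZ normrM normfV !normr_id (gtr0_norm d0) divfK ?gt_eqF.
have := hM ((d / `|x|) *: x); rewrite ny lexx islinZ // normrZ => /(_ isT) h.
rewrite normrM normfV !normr_id (gtr0_norm d0) in h.
rewrite -(ler_pM2l d0) mulrA mulrCA divff ?gt_eqF // mulr1.
have hx' : 0 < `|x|^-1 by rewrite invr_gt0.
rewrite -(ler_pM2r hx') mulrK ?unitfE ?gt_eqF //.
by rewrite mulrAC.
Qed.

Lemma cont_bound L : islin L -> continuous L ->
  exists C, 0 <= C /\ forall x, `|L x| <= C * `|x|.
Proof.
move=> hL cL.
have := cL 0 => /cvgrPdist_lt /(_ 1 ltr01).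
move=> /nbhs_ballP; rewrite (islin0 hL) => -[d /= d0 hd].

exists (1 / (d / 2)); split; first by rewrite divr_ge0 // divr_ge0 // ltW.
apply: scale_bound => //; first by rewrite divr_gt0.
move=> y hy; have : ball (0:Y) d y.
  by rewrite -ball_normE /ball_ /= sub0r normrN (le_lt_trans hy) // gtr_pMr // invf_lt1 // ltr1n.
by move=> /hd /=; rewrite sub0r normrN => /ltW.
Qed.

End Gen.
Section Real.
Variables (R : realType) (Y : normedModType R).

Lemma norm_small_eq (x y : Y) (k : R) : 0 <= k ->
  (forall e, 0 < e -> `|x - y| <= e * k) -> x = y.
Proof.
move=> k0 h; apply/eqP; rewrite -subr_eq0 -normr_le0.
apply/ler_addgt0Pr => e e0; rewrite add0r.
have := h (e / (k + 1)); rewrite divr_gt0 ?ltr_wpDl // => /(_ isT) /le_trans; apply.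
rewrite mulrAC ler_pdivrMr ?ltr_wpDl // ler_pM2l //; lra.
Qed.

Lemma left_const (phi : R -> Y) a b : a <= b ->
 (forall c, a <= c -> c < b -> forall e, 0 < e -> exists2 d, 0 < d &
     forall v, c < v -> v < c + d -> v <= b -> `|phi v - phi c| <= e) ->
 (forall u, a < u -> u <= b -> forall e, 0 < e -> exists2 d, 0 < d &
     forall h, 0 < h -> h < d -> a <= u - h -> `|phi u - phi (u - h)| <= e * h) ->
 phi a = phi b.
Proof.
move=> ab H1 H2; apply/esym/(@norm_small_eq _ _ (b - a)); first lra.
move=> e e0.
pose good y := `|phi b - phi (b - y)| <= e * y.
pose T := [set x | 0 <= x <= b - a /\ forall y, 0 <= y <= x -> good y].
have T0 : T 0.
  split; first by apply/andP; split; lra.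
  move=> y /andP[y0 y0']; have -> : y = 0 by apply/le_anti; rewrite y0 y0'.
  by rewrite /good subr0 subrr normr0 mulr0.
have hs : has_sup T.
  split; first by exists 0.
  by exists (b - a) => x [/andP[_ ->]].
set c := sup T.
have c0 : 0 <= c by apply: sup_upper_bound.
have cba : c <= b - a by apply: ge_sup; [exists 0| move=> x [/andP[_ ->]]].
have cl1 : forall y, 0 <= y -> y < c -> good y.
  move=> y y0 yc; have [x [_ Tx] hx] := @sup_adherent _ T (c - y) ltac:(by rewrite subr_gt0) hs.
  apply: Tx; apply/andP; split => //; rewrite /c in yc hx; lra.
have cl3 : good c.
  have [->|cpos] := eqVneq c 0.
    by rewrite /good subr0 subrr normr0 mulr0.
  have cpos' : 0 < c by rewrite lt_neqAle eq_sym cpos c0.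
  apply/ler_addgt0Pr => eps eps0.
  have [d d0 hd] := H1 (b - c) ltac:(lra) ltac:(lra) eps eps0.
  pose y := c - Num.min d c / 2.
  have m0 : 0 < Num.min d c by rewrite lt_min d0 cpos'.
  have mc : Num.min d c <= c by rewrite ge_min lexx orbT.
  have md : Num.min d c <= d by rewrite ge_min lexx.
  have gy : good y by apply: cl1; rewrite /y; lra.
  have := hd (b - y); rewrite /y.
  move=> /(_ ltac:(lra) ltac:(lra) ltac:(lra)) hv.
  rewrite /good (_ : phi b - phi (b - c) = (phi b - phi (b - y)) + (phi (b - y) - phi (b - c))); last first.
    by rewrite addrA subrK.
  rewrite (le_trans (ler_normD _ _)) // lerD //.
  by rewrite (le_trans gy) // ler_pM2l // /y; lra.
have Tc : T c.
  split; first by apply/andP; split.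
  move=> y /andP[y0 yc]; have [yc'|cy] := ltP y c; first exact: cl1.
  by have -> : y = c by apply/le_anti; rewrite yc cy.
have cba' : c = b - a.
  apply/le_anti; rewrite cba /=; rewrite leNgt; apply/negP => cl.
  have [d d0 hd] := H2 (b - c) ltac:(lra) ltac:(lra) e e0.
  pose h := Num.min (d / 2) (b - a - c).
  have h0 : 0 < h by rewrite lt_min divr_gt0 //= subr_gt0.
  have hd2 : h <= d / 2 by rewrite ge_min lexx.
  have hb : h <= b - a - c by rewrite ge_min lexx orbT.
  have : T (c + h).
    split; first by apply/andP; split; lra.
    move=> y /andP[y0 ych]; have [yc|cy] := leP y c.
      by apply: Tc.2; rewrite y0 yc.
    have := hd (y - c) ltac:(lra) ltac:(lra) ltac:(lra).
    rewrite (_ : b - c - (y - c) = b - y); last by rewrite opprB addrA subrK.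
    move=> hk; rewrite /good (_ : phi b - phi (b - y) = (phi b - phi (b - c)) + (phi (b - c) - phi (b - y))); last first.
      by rewrite addrA subrK.
    rewrite (le_trans (ler_normD _ _)) // (_ : e * y = e * c + e * (y - c)); last by rewrite mulrBr addrC subrK.
    by rewrite lerD.
  move=> /(sup_upper_bound hs); rewrite -/c; lra.
have := Tc.2 (b - a); rewrite -cba' lexx c0 => /(_ isT).
rewrite /good cba' (_ : b - (b - a) = a); [by rewrite distrC | lra].
Qed.

End Real.

Section Main.
Variables (R : realType) (Y : completeNormedModType R).

Lemma Jint (J : set R) : time_set J -> forall a b x, J a -> J b -> a <= x -> x <= b -> J x.
Proof.
case=> [->|[T [T0 ->]]] a b x /= Ja Jb ax xb.
  lra.
move: Ja Jb => /andP[a0 aT] /andP[b0 bT]; apply/andP; split; lra.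
Qed.

Lemma unif_bound (J : set R) (G : R -> R -> Y -> Y) : time_set J ->
  inh_semigroup J G ->
  (forall (f : Y) s, J s ->
        {within [set u | J u /\ s <= u], continuous (fun u => G s u f)}) ->
  forall s t, J s -> J t -> s <= t ->
  exists M, 0 <= M /\ forall v, s <= v -> v <= t -> forall x, `|G s v x| <= M * `|x|.
Proof.
move=> hJ [hlin _ _] hc s t Js Jt st.
pose F := [set f | exists v, s <= v <= t /\ f = G s v].
have lF : forall f, F f -> islin f /\ continuous f.
  move=> f [v [/andP[sv vt] ->]].
  have Jv : J v := Jint hJ Js Jt sv vt.
  have [h1 h2] := hlin s v Js Jv sv; split => //.
have hU : uniform_bounded F.
  apply: (@Banach_Steinhauss R Y Y F).
- move=> f Ff; have [l c] := lF f Ff; split.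
    have [C [C0 hC]] := cont_bound l c.
    move=> r; exists (C * r) => x xr; rewrite (le_trans (hC x)) //.
    by rewrite ler_wpM2l.
  by move=> a u w; apply: l.
- move=> x.
  pose A := (fun v => G s v x) @` `[s, t].
  have cA : compact A.
    apply: continuous_compact; last exact: segment_compact.
    apply: (@continuous_subspaceW _ _ _ [set u | J u /\ s <= u]); last exact: hc.
    move=> u /=; rewrite in_itv /= => /andP[su ut]; split => //.
    exact: (Jint hJ Js Jt su ut).
  have := compact_bounded cA.
  case=> M [_ hM]; exists (M + 1) => f [v [vst ->]].
  apply: (hM (M + 1)); first by rewrite ltrDl.
  by exists v => //; rewrite in_itv.
have [M hM] := hU 1.
exists `|M|; split => // v sv vt x.
have Fv : F (G s v) by exists v; rewrite sv vt.
have := @scale_bound R Y Y (G s v) M 1 (lF _ Fv).1 ltr01.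
move=> /(_ _ x) h.
rewrite (le_trans (h _)) // ?divr1 ?ler_wpM2r // ?real_ler_norm ?num_real //.
by move=> y y1; apply: hM.
Qed.

End Main.

Lemma left_near (R : realType) (J : set R) u (P : R -> Prop) :
  (\forall h \near within (fun h => J (u - h)) (0:R)^'+, P h) ->
  exists2 d, 0 < d & forall h, 0 < h -> h < d -> J (u - h) -> P h.
Proof.
rewrite /within /= => /nbhs_ballP [d /= d0 hd].
exists d => // h h0 hd' Jh.
apply: hd => //.
by rewrite -ball_normE /ball_ /= sub0r normrN gtr0_norm.
Qed.

Lemma within_eps (R : realType) (V : normedModType R) (A : set R) (f : R -> V) c e :
  {within A, continuous f} -> A c -> 0 < e ->
  exists2 d, 0 < d & forall v, `|c - v| < d -> A v -> `|f c - f v| < e.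
Proof.
move=> hf Ac e0.
have := (proj1 (subspace_continuousP _ _) hf) c Ac.
move=> /cvgrPdist_lt /(_ e e0); rewrite /within /= => /nbhs_ballP [d /= d0 hd].
exists d => // v cv Av; apply: hd => //.
Qed.



Lemma part1 (R : realType)
  (Y Y1 : completeNormedModType R) (i : Y1 -> Y)
  (hi_cont : continuous i)
  (J : set R) (hJ : time_set J)
  (G1 G2 : R -> R -> Y -> Y)
  (hG1 : inh_semigroup J G1) (hG2 : inh_semigroup J G2)
  (hreg1 : regular i J G1) (hreg2 : regular i J G2)
  (hA : forall (f : Y1) (t : R), J t ->
          generator J G1 t (i f) = generator J G2 t (i f)) :
  forall (f : Y1) (s t : R), J s -> J t -> s <= t ->
      G1 s t (i f) = G2 s t (i f).
Proof.
move=> f s t Js Jt st.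
have [M [M0 hM]] := unif_bound hJ hG1 (let: And5 _ _ _ h _ := hreg1 in h) Js Jt st.
case: hG1 => lin1 id1 comp1; case: hG2 => lin2 id2 comp2.
case: hreg1 => dom1 _ _ c41 _; case: hreg2 => dom2 inv2 c32 _ _.
pose w0 := i f.
pose phi u := G1 s u (G2 u t w0).
have Jst : forall v, s <= v -> v <= t -> J v by move=> v sv vt; exact: (Jint hJ Js Jt sv vt).
have : phi s = phi t.
  apply: left_const => //.
  - move=> c sc ct e e0.
    have Jc := Jst c sc (ltW ct).
    have [g [hg gc]] := c32 f t Jt.
    have M1 : 0 < M + 1 by rewrite ltr_wpDl.
    pose e1 := e / (2 * (M + 1)).
    have e10 : 0 < e1 by rewrite divr_gt0 // mulr_gt0.
    have := hi_cont (g c) => /cvgrPdist_lt /(_ e1 e10) /nbhs_ballP [eta /= eta0 heta].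
    have [d1 d10 hd1] := within_eps gc (conj Jc (ltW ct)) eta0.
    pose xc := G2 c t w0.
    have e20 : 0 < e / 2 by rewrite divr_gt0.
    have [d2 d20 hd2] := within_eps (c41 xc s Js) (conj Jc sc) e20.
    exists (Num.min d1 d2); first by rewrite lt_min d10 d20.
    move=> v cv vd vt.
    have sv : s <= v by rewrite (le_trans sc) // ltW.
    have Jv := Jst v sv vt.
    have cvd1 : `|c - v| < d1.
      rewrite distrC gtr0_norm ?subr_gt0 // ltrBlDl (lt_le_trans vd) // lerD2l.
      by rewrite ge_min lexx.
    have cvd2 : `|c - v| < d2.
      rewrite distrC gtr0_norm ?subr_gt0 // ltrBlDl (lt_le_trans vd) // lerD2l.
      by rewrite ge_min lexx orbT.
    have hxv : G2 v t w0 = i (g v) by rewrite hg.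
    have hxc : xc = i (g c) by rewrite /xc hg // ltW.
    have l1 := (lin1 s v Js Jv sv).1.
    rewrite /phi -/xc (_ : G1 s v (G2 v t w0) - G1 s c xc =
       G1 s v (G2 v t w0 - xc) + (G1 s v xc - G1 s c xc)); last first.
      by rewrite (islinB l1) addrA subrK.
    rewrite (le_trans (ler_normD _ _)) // (splitr e) lerD //; last first.
      by rewrite distrC ltW // hd2.
    rewrite (le_trans (hM v sv vt _)) // hxv hxc distrC.
    have := heta (g v) ltac:(by rewrite -ball_normE /ball_ /=; apply: hd1).
    move=> /= /ltW h; rewrite (le_trans (ler_wpM2l M0 h)) // /e1.
    have -> : M * (e / (2 * (M + 1))) = e / 2 * (M / (M + 1)).
      by field; rewrite gt_eqF.
    apply: ler_piMr; first exact: ltW.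
    rewrite ler_pdivrMr // mul1r; lra.
  - move=> u su ut e e0.
    have Ju := Jst u (ltW su) ut.
    have [f' hf'] := inv2 u t Ju Jt ut f.
    pose w := i f'.
    have gv1 := xgetPex 0 (dom1 f' u Ju).
    have gv2 := xgetPex 0 (dom2 f' u Ju).
    case: gv1 => _ [_ q1]; case: gv2 => _ [_ q2].
    have q2' : (fun h => h^-1 *: (G2 (u - h) u w - w))
        @ within (fun h => J (u - h)) (0:R)^'+ --> generator J G1 u w.
      by rewrite (hA f' u Ju); exact: q2.
    have M1 : 0 < M + 1 by rewrite ltr_wpDl.
    pose ep := e / (M + 1) / 2.
    have ep0 : 0 < ep by rewrite !divr_gt0.
    move/cvgrPdist_lt: q1 => /(_ _ ep0) n1.
    move/cvgrPdist_lt: q2' => /(_ _ ep0) n2.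
    have [d d0 hd] := left_near (filterI n1 n2).
    exists d => // h h0 hd' suh.
    have Juh : J (u - h) by apply: Jst => //; lra.
    have [n1h n2h] := hd h h0 hd' Juh.
    have uhu : u - h <= u by lra.
    rewrite /phi -hf' -/w.
    rewrite -(comp1 s (u - h) u Js Juh Ju suh uhu w).
    rewrite -(comp2 (u - h) u t Juh Ju Jt uhu ut w0) /w0 -hf' -/w.
    have l1 := (lin1 s (u - h) Js Juh suh).1.
    rewrite -(islinB l1).
    have uht : u - h <= t by lra.
    rewrite (le_trans (hM _ suh uht _)) //.
    set a := G1 (u - h) u w; set b := G2 (u - h) u w.
    set g := generator J G1 u w in n1h n2h.
    have -> : a - b = h *: ((g - h^-1 *: (b - w)) - (g - h^-1 *: (a - w))).
      have E1 : (g - h^-1 *: (b - w)) - (g - h^-1 *: (a - w)) = h^-1 *: (a - b).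
        by rewrite opprB addrC addrA subrK -scalerBr opprB addrA subrK.
      by rewrite E1 scalerA mulfV ?gt_eqF // scale1r.
    rewrite normrZ gtr0_norm //.
    have hn : `|(g - h^-1 *: (b - w)) - (g - h^-1 *: (a - w))| <= 2 * ep.
      rewrite (le_trans (ler_normB _ _)) // mulr2n mulrDl mul1r lerD // ltW //.
    rewrite (le_trans (ler_wpM2l M0 (ler_wpM2l (ltW h0) hn))) //.
    rewrite mulrCA [e * h]mulrC ler_pM2l //.
    have -> : M * (2 * ep) = e * (M / (M + 1)).
      by rewrite /ep; field; rewrite gt_eqF.
    apply: ler_piMr; first exact: ltW.
    rewrite ler_pdivrMr // mul1r; lra.
by rewrite /phi (id1 s Js) (id2 t Jt).
Qed.

Unset Implicit Arguments.

Theorem corollary2p11 (R : realType)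
  (Y Y1 : completeNormedModType R) (i : Y1 -> Y)
  (hY : separable Y) (hY1 : separable Y1)
  (hi_lin : forall (a : R) (x y : Y1), i (a *: x + y) = a *: i x + i y)
  (hi_inj : injective i) (hi_cont : continuous i)
  (J : set R) (hJ : time_set J)
  (G1 G2 : R -> R -> Y -> Y)
  (hG1 : inh_semigroup J G1) (hG2 : inh_semigroup J G2)
  (hreg1 : regular i J G1) (hreg2 : regular i J G2)
  (hA : forall (f : Y1) (t : R), J t ->
          generator J G1 t (i f) = generator J G2 t (i f)) :
  (forall (f : Y1) (s t : R), J s -> J t -> s <= t ->
      G1 s t (i f) = G2 s t (i f)) /\
  (closure (range i) = setT ->
      forall (f : Y) (s t : R), J s -> J t -> s <= t -> G1 s t f = G2 s t f).
Proof.
have P1 := part1 hi_cont hJ hG1 hG2 hreg1 hreg2 hA.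
split => // hd f s t Js Jt st.
have [c1 _ _] := hG1; have [c2 _ _] := hG2.
have C1 := (c1 s t Js Jt st).2; have C2 := (c2 s t Js Jt st).2.
pose S := (fun x => `|G1 s t x - G2 s t x|) @^-1` [set r : R | r = 0].
have cS : closed S.
  apply: preimage_closed; last exact: closed_eq.
  move=> x _.
  exact: (cvg_norm (continuousB (C1 x) (C2 x))).
have : closure (range i) f by rewrite hd.
move=> /(closureS (_ : range i `<=` S)).
rewrite -(proj1 (closure_id S) cS) /S /= => /(_ _) h.
apply/eqP; rewrite -subr_eq0 -normr_eq0; apply/eqP; apply: h.
by move=> _ [y _ <-]; rewrite /= P1 // subrr normr0.
Qed.
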